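(* Let $\lambda$ and $g$ be as in the context, let $q(-1)=-1$ and let $q(0)$ be the fixed point of $g$ with negative multiplier. Then \[ |g'(x)|\ge |g'(q(0))|>1 \] for all $x\in[q(-1),\hat{q}(0)]\cup[q(0),\hat{q}(-1)]$.
   Context: There is a unique constant $\lambda=2.5029\ldots$ and a unique infinitely (period-doubling) renormalizable analytic unimodal map $g:[-1,1]\to[-1,1]$ solving the Cvitanović–Feigenbaum–Coullet–Tresser functional equation $g(x)=-\lambda\, g^{2}(-x/\lambda)$ for $-1\le x\le1$ (here $g^2=g\circ g$). Here unimodal means: $-1$ is the unique fixed point with positive multiplier, $g(1)=-1$, and $g$ has a unique maximum at an interior nondegenerate critical point $c^{(0)}$. Moreover $g$ is analytic on a complex neighborhood of $[-1,1]$, even, concave on $[-c^{(1)},c^{(1)}]$ where $c^{(1)}=g(c^{(0)})$ is the critical value, satisfies $g(c^{(1)})=-c^{(1)}/\lambda$ and $g'(c^{(1)})=-\lambda$, and has negative Schwarzian derivative. For $x\ne c^{(0)}$ the reflection $\hat{x}$ is the point with $g(\hat x)=g(x)$, $\hat x\ne x$; and $\hat{c}^{(0)}=c^{(0)}$. *)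

(* Defs.v *)
From Stdlib Require Import Reals Lra.
From Coquelicot Require Import Coquelicot.
Open Scope R_scope.

Definition analytic_at (g : R -> R) (x : R) : Prop :=
  exists (a : nat -> R) (r : R), 0 < r /\
    forall y, Rabs (y - x) < r -> is_pseries a (y - x) (g y).

(* g is analytic on an open neighbourhood of [-1,1] (equivalent to g|[-1,1]
   extending holomorphically to a complex neighbourhood of [-1,1]). *)
Definition analytic_near_interval (g : R -> R) : Prop :=
  exists eps, 0 < eps /\ forall x, Rabs x < 1 + eps -> analytic_at g x.

Definition in_I (x : R) : Prop := -1 <= x <= 1.

Definition unimodal (g : R -> R) (c0 : R) : Prop :=
  (forall x, in_I x -> in_I (g x)) /\
  g (-1) = -1 /\ 0 < Derive g (-1) /\
  (forall x, in_I x -> g x = x -> 0 < Derive g x -> x = -1) /\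
  g 1 = -1 /\
  -1 < c0 < 1 /\
  Derive g c0 = 0 /\ Derive_n g 2 c0 <> 0 /\
  (forall x, in_I x -> x <> c0 -> g x < g c0) /\
  (forall x y, -1 <= x -> x < y -> y <= c0 -> g x < g y) /\
  (forall x y, c0 <= x -> x < y -> y <= 1 -> g y < g x).

Definition concave_on (g : R -> R) (a b : R) : Prop :=
  forall x y t, a <= x <= b -> a <= y <= b -> 0 <= t <= 1 ->
    t * g x + (1 - t) * g y <= g (t * x + (1 - t) * y).

Definition schwarzian (g : R -> R) (x : R) : R :=
  Derive_n g 3 x / Derive g x - 3 / 2 * (Derive_n g 2 x / Derive g x) ^ 2.

Definition cfct_fixed_point (lam : R) (g : R -> R) (c0 : R) : Prop :=
  2.5029 <= lam < 2.5030 /\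
  analytic_near_interval g /\
  (forall x, in_I x -> g x = - lam * g (g (- x / lam))) /\
  unimodal g c0 /\
  (forall x, in_I x -> g (- x) = g x) /\
  concave_on g (- g c0) (g c0) /\
  g (g c0) = - g c0 / lam /\
  Derive g (g c0) = - lam /\
  (forall x, in_I x -> x <> c0 -> schwarzian g x < 0).

(* y is the reflection \hat x of x w.r.t. the critical point c0:
   \hat c0 = c0, and for x <> c0, \hat x is the point of [-1,1] with
   g(\hat x) = g(x) and \hat x <> x. *)
Definition is_reflection (g : R -> R) (c0 x y : R) : Prop :=
  in_I y /\ g y = g x /\ (x = c0 -> y = c0) /\ (x <> c0 -> y <> x).

(* Main.v *)
Require Import Defs.
From Stdlib Require Import Reals Lra.
From Coquelicot Require Import Coquelicot.
Open Scope R_scope.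

Lemma pseries_bound (a : nat -> R) (rho l : R) :
  is_pseries a rho l -> exists M, forall n, Rabs (a n * rho ^ n) <= M.
Proof.
  intros H.
  assert (Hl : is_lim_seq (fun k => scal (pow_n rho k) (a k)) 0).
  { apply ex_series_lim_0. exists l. exact H. }
  destruct (filterlim_bounded (fun k => scal (pow_n rho k) (a k))) as [M HM].
  { exists 0. exact Hl. }
  exists M. intros n. specialize (HM n).
  rewrite pow_n_pow in HM. unfold scal in HM; simpl in HM. unfold mult in HM; simpl in HM.
  unfold norm in HM; simpl in HM. unfold abs in HM; simpl in HM. rewrite Rmult_comm. exact HM.
Qed.

Lemma pseries_radius (a : nat -> R) (r x : R) (F : R -> R) :
  0 < r -> (forall y, Rabs (y - x) < r -> is_pseries a (y - x) (F y)) ->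
  forall z, Rabs z < r -> Rbar_lt (Rabs z) (CV_radius a).
Proof.
  intros Hr H z Hz.
  set (rho := (Rabs z + r) / 2).
  assert (Hrho : is_pseries a rho (F (x + rho))).
  { replace rho with ((x + rho) - x) at 1 by ring. apply H.
    replace (x + rho - x) with rho by ring. unfold rho.
    pose proof (Rabs_pos z). rewrite Rabs_pos_eq; lra. }
  destruct (pseries_bound _ _ _ Hrho) as [M HM].
  destruct (CV_radius_bounded a) as [Hub _].
  assert (Hle : Rbar_le rho (CV_radius a)) by (apply Hub; exists M; exact HM).
  apply Rbar_lt_le_trans with (Finite rho); [simpl; unfold rho; lra | exact Hle].
Qed.

Lemma loc_ball (x e : R) (P : R -> Prop) : 0 < e -> (forall t, Rabs (t - x) < e -> P t) -> locally x P.
Proof.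
  intros He H. exists (mkposreal e He). intros t Ht. apply H. exact Ht.
Qed.

Lemma analytic_smooth (g : R -> R) (x : R) : analytic_at g x ->
  forall k, ex_derive (Derive_n g k) x.
Proof.
  intros [a [r [Hr H]]] k.
  assert (Hrad := pseries_radius a r x g Hr H).
  assert (Heq : forall y, Rabs (y - x) < r -> forall k, Derive_n g k y = PSeries (PS_derive_n k a) (y - x)).
  { intros y Hy k'.
    rewrite (Derive_n_ext_loc g (fun t => PSeries a (t + - x))).
    - rewrite Derive_n_comp_trans. apply Derive_n_PSeries. apply Hrad. exact Hy.
    - apply loc_ball with (r - Rabs (y - x)). lra.
      intros t Ht. symmetry. apply is_pseries_unique. apply H.
      replace (t - x) with ((t - y) + (y - x)) by ring.
      eapply Rle_lt_trans. apply Rabs_triang. lra. }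
  apply ex_derive_ext_loc with (fun t => PSeries (PS_derive_n k a) (t - x)).
  - apply loc_ball with r. exact Hr. intros t Ht. symmetry. apply Heq. exact Ht.
  - apply (ex_derive_comp (PSeries (PS_derive_n k a)) (fun t => t - x)).
    + apply ex_derive_PSeries. rewrite CV_radius_derive_n. apply Hrad.
      replace (x - x) with 0 by ring. rewrite Rabs_R0. exact Hr.
    + exists 1. apply (is_derive_ext (fun t => t + - x)). intros t; reflexivity.
      auto_derive. auto. ring.
Qed.

Lemma deriv_neg_loc f x l : is_derive f x l -> l < 0 ->
  exists d, 0 < d /\ (forall z, x < z < x + d -> f z < f x) /\
                      (forall z, x - d < z < x -> f x < f z).
Proof.
  intros Hd Hl. apply is_derive_Reals in Hd.
  destruct (Hd (- l / 2)) as [del Hdel]. lra.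
  exists del. split. apply cond_pos. split.
  - intros z Hz. assert (Hh : z - x <> 0) by lra.
    assert (Ha : Rabs (z - x) < del) by (rewrite Rabs_pos_eq; lra).
    specialize (Hdel _ Hh Ha). replace (x + (z - x)) with z in Hdel by ring.
    apply Rabs_def2 in Hdel. destruct Hdel as [H1 H2].
    set (q := (f z - f x) / (z - x)) in *.
    assert (f z - f x = q * (z - x)) by (unfold q; field; lra).
    nra.
  - intros z Hz. assert (Hh : z - x <> 0) by lra.
    assert (Ha : Rabs (z - x) < del) by (rewrite Rabs_left; lra).
    specialize (Hdel _ Hh Ha). replace (x + (z - x)) with z in Hdel by ring.
    apply Rabs_def2 in Hdel. destruct Hdel as [H1 H2].
    set (q := (f z - f x) / (z - x)) in *.
    assert (f z - f x = q * (z - x)) by (unfold q; field; lra).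
    nra.
Qed.

Lemma deriv_pos_loc f x l : is_derive f x l -> 0 < l ->
  exists d, 0 < d /\ (forall z, x < z < x + d -> f x < f z) /\
                      (forall z, x - d < z < x -> f z < f x).
Proof.
  intros Hd Hl.
  destruct (deriv_neg_loc (fun t => - f t) x (- l)) as [d [Hd0 [H1 H2]]].
  exact (is_derive_opp _ _ _ Hd). lra.
  exists d. split. exact Hd0. split.
  intros z Hz. specialize (H1 z Hz). lra.
  intros z Hz. specialize (H2 z Hz). lra.
Qed.

Lemma minprin (h h1 h2 : R -> R) (a b : R) : a < b ->
  (forall x, a <= x <= b -> continuity_pt h x) ->
  (forall x, a < x < b -> is_derive h x (h1 x)) ->
  (forall x, a < x < b -> is_derive h1 x (h2 x)) ->
  (forall x, a < x < b -> h1 x = 0 -> h2 x < 0) ->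
  forall x, a < x < b -> Rmin (h a) (h b) < h x.
Proof.
  intros Hab Hc Hd1 Hd2 Hcond.
  assert (Hno : forall y, a < y < b -> ~ (forall z, a <= z <= b -> h y <= h z)).
  { intros y Hy Hmin.
    assert (Hh1 : h1 y = 0).
    { assert (pr : derivable_pt h y).
      { exists (h1 y). apply is_derive_Reals. apply Hd1. exact Hy. }
      pose proof (deriv_minimum h a b y pr (proj1 Hy) (proj2 Hy)) as Hm.
      rewrite <- (derive_pt_eq_0 h y (h1 y) pr).
      apply Hm. intros z Hz1 Hz2. apply Hmin. lra.
      apply is_derive_Reals. apply Hd1. exact Hy. }
    pose proof (Hcond y Hy Hh1) as Hneg.
    destruct (deriv_neg_loc h1 y (h2 y) (Hd2 y Hy) Hneg) as [d [Hd [Hr _]]].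
    set (z := Rmin (y + d / 2) ((y + b) / 2)).
    assert (Hz : y < z < y + d /\ z < b).
    { unfold z. unfold Rmin; destruct Rle_dec; lra. }
    destruct (MVT_cor2 h h1 y z) as [c [Hc1 Hc2]]. lra.
    { intros c Hcc. apply is_derive_Reals. apply Hd1. lra. }
    assert (h1 c < h1 y) by (apply Hr; lra).
    assert (h y <= h z) by (apply Hmin; lra).
    nra. }
  destruct (continuity_ab_min h a b (Rlt_le _ _ Hab) Hc) as [m [Hm1 Hm2]].
  assert (Hme : m = a \/ m = b).
  { destruct (Req_dec m a). left; auto. destruct (Req_dec m b). right; auto.
    exfalso. apply (Hno m). lra. exact Hm1. }
  intros x Hx.
  assert (Hhm : h m < h x).
  { destruct (Rle_lt_or_eq_dec (h m) (h x) (Hm1 x (conj (Rlt_le _ _ (proj1 Hx)) (Rlt_le _ _ (proj2 Hx))))).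
    exact r. exfalso. apply (Hno x Hx). intros z Hz. rewrite <- e. apply Hm1. exact Hz. }
  destruct Hme as [-> | ->].
  - eapply Rle_lt_trans. apply Rmin_l. exact Hhm.
  - eapply Rle_lt_trans. apply Rmin_r. exact Hhm.
Qed.

Lemma cont_eq_right f1 f2 x0 d : continuity_pt f1 x0 -> continuity_pt f2 x0 -> 0 < d ->
  (forall y, x0 < y < x0 + d -> f1 y = f2 y) -> f1 x0 = f2 x0.
Proof.
  intros H1 H2 Hd Heq. destruct (Req_dec (f1 x0) (f2 x0)) as [E|E]. exact E. exfalso.
  set (e := Rabs (f1 x0 - f2 x0) / 2).
  assert (He : 0 < e) by (unfold e; assert (0 < Rabs (f1 x0 - f2 x0)) by (apply Rabs_pos_lt; intro; apply E; lra); lra).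
  destruct (H1 e He) as [a1 [Ha1 Hb1]]. destruct (H2 e He) as [a2 [Ha2 Hb2]].
  set (y := x0 + Rmin d (Rmin a1 a2) / 2).
  assert (Hm : 0 < Rmin d (Rmin a1 a2)) by (repeat apply Rmin_glb_lt; lra).
  assert (Hy1 : Rmin d (Rmin a1 a2) <= d) by apply Rmin_l.
  assert (Hy2 : Rmin d (Rmin a1 a2) <= a1) by (eapply Rle_trans; [apply Rmin_r | apply Rmin_l]).
  assert (Hy3 : Rmin d (Rmin a1 a2) <= a2) by (eapply Rle_trans; [apply Rmin_r | apply Rmin_r]).
  assert (Hdy : R_dist y x0 < a1 /\ R_dist y x0 < a2).
  { unfold R_dist, y. replace (x0 + Rmin d (Rmin a1 a2) / 2 - x0) with (Rmin d (Rmin a1 a2) / 2) by ring.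
    rewrite Rabs_pos_eq; lra. }
  assert (Hyx : y <> x0) by (unfold y; lra).
  specialize (Hb1 y (conj (conj I (not_eq_sym Hyx)) (proj1 Hdy))).
  specialize (Hb2 y (conj (conj I (not_eq_sym Hyx)) (proj2 Hdy))).
  simpl in Hb1, Hb2. unfold R_dist in Hb1, Hb2.
  rewrite (Heq y) in Hb1 by (unfold y; lra).
  assert (Rabs (f1 x0 - f2 x0) <= Rabs (f2 y - f1 x0) + Rabs (f2 y - f2 x0)).
  { replace (f1 x0 - f2 x0) with (-(f2 y - f1 x0) + (f2 y - f2 x0)) by ring.
    eapply Rle_trans. apply Rabs_triang. rewrite Rabs_Ropp. lra. }
  unfold e in *. lra.
Qed.
Ltac etafix g := repeat (change (fun x : R => g x) with g in *); repeat (change (fun x : R => Derive g x) with (Derive g) in *);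
  repeat (change (fun x : R => Derive (Derive g) x) with (Derive (Derive g)) in *).
Lemma phi_derive g t : ex_derive g t -> ex_derive g (g t) -> ex_derive (Derive g) t -> ex_derive (Derive g) (g t) ->
 is_derive (fun t => Derive g (g t) * Derive g t) t (Derive_n g 2 (g t) * (Derive g t)^2 + Derive g (g t) * Derive_n g 2 t).
Proof.
  intros. auto_derive. tauto. simpl. etafix g. ring.
Qed.
Lemma phi2_derive g t : ex_derive g t -> ex_derive g (g t) -> ex_derive (Derive g) t -> ex_derive (Derive g) (g t) ->
  ex_derive (Derive_n g 2) t -> ex_derive (Derive_n g 2) (g t) ->
 is_derive (fun t => Derive_n g 2 (g t) * (Derive g t)^2 + Derive g (g t) * Derive_n g 2 t) t
  (Derive_n g 3 (g t) * (Derive g t)^3 + 3 * Derive_n g 2 (g t) * Derive g t * Derive_n g 2 t + Derive g (g t) * Derive_n g 3 t).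
Proof.
  intros. simpl in *. auto_derive. etafix g. tauto. simpl. etafix g. ring.
Qed.

Lemma cont_eq_left f1 f2 x0 d : continuity_pt f1 x0 -> continuity_pt f2 x0 -> 0 < d ->
  (forall y, x0 - d < y < x0 -> f1 y = f2 y) -> f1 x0 = f2 x0.
Proof.
  intros H1 H2 Hd Heq. destruct (Req_dec (f1 x0) (f2 x0)) as [E|E]. exact E. exfalso.
  set (e := Rabs (f1 x0 - f2 x0) / 2).
  assert (He : 0 < e) by (unfold e; assert (0 < Rabs (f1 x0 - f2 x0)) by (apply Rabs_pos_lt; intro; apply E; lra); lra).
  destruct (H1 e He) as [a1 [Ha1 Hb1]]. destruct (H2 e He) as [a2 [Ha2 Hb2]].
  set (y := x0 - Rmin d (Rmin a1 a2) / 2).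
  assert (Hm : 0 < Rmin d (Rmin a1 a2)) by (repeat apply Rmin_glb_lt; lra).
  assert (Hy1 : Rmin d (Rmin a1 a2) <= d) by apply Rmin_l.
  assert (Hy2 : Rmin d (Rmin a1 a2) <= a1) by (eapply Rle_trans; [apply Rmin_r | apply Rmin_l]).
  assert (Hy3 : Rmin d (Rmin a1 a2) <= a2) by (eapply Rle_trans; [apply Rmin_r | apply Rmin_r]).
  assert (Hdy : R_dist y x0 < a1 /\ R_dist y x0 < a2).
  { unfold R_dist, y. replace (x0 - Rmin d (Rmin a1 a2) / 2 - x0) with (- (Rmin d (Rmin a1 a2) / 2)) by ring.
    rewrite Rabs_Ropp. rewrite Rabs_pos_eq; lra. }
  assert (Hyx : y <> x0) by (unfold y; lra).
  specialize (Hb1 y (conj (conj I (not_eq_sym Hyx)) (proj1 Hdy))).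
  specialize (Hb2 y (conj (conj I (not_eq_sym Hyx)) (proj2 Hdy))).
  simpl in Hb1, Hb2. unfold R_dist in Hb1, Hb2.
  rewrite (Heq y) in Hb1 by (unfold y; lra).
  assert (Rabs (f1 x0 - f2 x0) <= Rabs (f2 y - f1 x0) + Rabs (f2 y - f2 x0)).
  { replace (f1 x0 - f2 x0) with (-(f2 y - f1 x0) + (f2 y - f2 x0)) by ring.
    eapply Rle_trans. apply Rabs_triang. rewrite Rabs_Ropp. lra. }
  unfold e in *. lra.
Qed.

Lemma fe_deriv (g : R -> R) lam y : lam <> 0 ->
  locally y (fun t => g t = -lam * g (g (-t/lam))) -> ex_derive g (-y/lam) -> ex_derive g (g (-y/lam)) ->
  Derive g y = Derive g (g (-y/lam)) * Derive g (-y/lam).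
Proof.
  intros Hl Hloc H1 H2. rewrite (Derive_ext_loc _ _ _ Hloc). apply is_derive_unique.
  auto_derive. tauto. change (fun x : R => g x) with g. unfold Rdiv. field. exact Hl.
Qed.

Lemma even_deriv (g : R -> R) y :
  locally y (fun t => g t = g (- t)) -> ex_derive g (- y) -> Derive g y = - Derive g (- y).
Proof.
  intros Hloc H1. rewrite (Derive_ext_loc _ _ _ Hloc). apply is_derive_unique.
  auto_derive. exact H1. change (fun x : R => g x) with g. ring.
Qed.

Lemma alg A B C p q r : A < 0 -> p < 0 -> C / A - 3 / 2 * (B / A) ^ 2 < 0 ->
  r / p - 3 / 2 * (q / p) ^ 2 < 0 -> B * p ^ 2 + A * q = 0 ->
  C * p ^ 3 + 3 * B * p * q + A * r < 0.
Proof.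
  intros HA Hp H1 H2 H3.
  set (u := B / A) in *. set (c := C / A) in *. set (s := r / p) in *.
  assert (EB : B = u * A) by (unfold u; field; lra).
  assert (EC : C = c * A) by (unfold c; field; lra).
  assert (Er : r = s * p) by (unfold s; field; lra).
  assert (Eq : q = - u * p ^ 2).
  { rewrite EB in H3. apply Rmult_eq_reg_l with A. 2: lra. nra. }
  assert (Eqp : q / p = - u * p) by (rewrite Eq; field; lra).
  rewrite Eqp in H2.
  rewrite EC, Er, Eq, EB.
  assert (Hbr : c * p ^ 2 + s - 3 * u ^ 2 * p ^ 2 < 0).
  { assert (0 < p ^ 2) by nra. nra. }
  replace (c * A * p ^ 3 + 3 * (u * A) * p * (- u * p ^ 2) + A * (s * p))
    with ((A * p) * (c * p ^ 2 + s - 3 * u ^ 2 * p ^ 2)) by ring.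
  assert (0 < A * p) by nra. nra.
Qed.

Theorem mainTheorem3 (lam : R) (g : R -> R) (c0 : R)
  (Hg : cfct_fixed_point lam g c0)
  (q0 : R) (Hq0I : in_I q0) (Hq0fix : g q0 = q0) (Hq0neg : Derive g q0 < 0)
  (qh0 qhm1 : R)
  (Hqh0 : is_reflection g c0 q0 qh0)
  (Hqhm1 : is_reflection g c0 (-1) qhm1) :
  Rabs (Derive g q0) > 1 /\
  forall x, (-1 <= x <= qh0 \/ q0 <= x <= qhm1) ->
    Rabs (Derive g x) >= Rabs (Derive g q0).
Proof.
  destruct Hg as [Hlam [[eps [Heps Han]] [HFE [Hun [Hev [Hconc [Hgc1 [Hdc1 Hsch]]]]]]]].
  destruct Hun as [Hmap [Hgm1 [Hdm1 [Hfixu [Hg1 [Hc0 [Hdc0 [Hd2c0 [Hmax [Hinc Hdec]]]]]]]]]].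
  assert (HID : forall x, -1 <= x <= 1 -> Rabs x < 1 + eps).
  { intros x Hx. assert (Rabs x <= 1) by (apply Rabs_le; lra). lra. }
  assert (Hsm : forall k x, -1 <= x <= 1 -> ex_derive (Derive_n g k) x).
  { intros k x Hx. apply analytic_smooth. apply Han. apply HID. exact Hx. }
  assert (ed0 : forall x, -1 <= x <= 1 -> ex_derive g x) by (intros x Hx; exact (Hsm 0%nat x Hx)).
  assert (ed1 : forall x, -1 <= x <= 1 -> ex_derive (Derive g) x) by (intros x Hx; exact (Hsm 1%nat x Hx)).
  assert (ed2 : forall x, -1 <= x <= 1 -> ex_derive (Derive_n g 2) x) by (intros x Hx; exact (Hsm 2%nat x Hx)).
  assert (ct0 : forall x, -1 <= x <= 1 -> continuity_pt g x).
  { intros x Hx. apply continuity_pt_filterlim. exact (ex_derive_continuous g x (ed0 x Hx)). }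
  assert (ct1 : forall x, -1 <= x <= 1 -> continuity_pt (Derive g) x).
  { intros x Hx. apply continuity_pt_filterlim. exact (ex_derive_continuous (Derive g) x (ed1 x Hx)). }
  assert (Hlp : 0 < lam) by lra.
  assert (Ec0 : c0 = 0).
  { destruct (Req_dec c0 0) as [E|E]; auto. exfalso.
    assert (HIc : in_I c0) by (unfold in_I; lra).
    pose proof (Hev c0 HIc) as H1.
    assert (HIc' : in_I (- c0)) by (unfold in_I; lra).
    assert (- c0 <> c0) by lra.
    pose proof (Hmax (- c0) HIc' H) as H2. lra. }
  subst c0.
  assert (Hnz : forall x, in_I x -> x <> 0 -> Derive g x <> 0).
  { intros x Hx Hx0 E. specialize (Hsch x Hx Hx0). unfold schwarzian in Hsch.
    rewrite E in Hsch. unfold Rdiv in Hsch. rewrite Rinv_0 in Hsch. ring_simplify in Hsch. lra. }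
  assert (Hpos : forall x, -1 <= x < 0 -> 0 < Derive g x).
  { intros x Hx. destruct (Rtotal_order (Derive g x) 0) as [Hl|[He|Hgt]]; try exact Hgt; exfalso.
    - destruct (deriv_neg_loc g x _ (Derive_correct _ _ (ed0 x ltac:(lra))) Hl) as [d [Hd [Hr _]]].
      set (z := Rmin (x + d/2) (x/2)).
      assert (Hz : x < z < x + d /\ z <= 0) by (unfold z, Rmin; destruct Rle_dec; lra).
      pose proof (Hr z (proj1 Hz)). assert (g x < g z) by (apply Hinc; lra). lra.
    - apply (Hnz x). unfold in_I; lra. lra. exact He. }
  assert (Hneg : forall x, 0 < x <= 1 -> Derive g x < 0).
  { intros x Hx. destruct (Rtotal_order (Derive g x) 0) as [Hl|[He|Hgt]]; try exact Hl; exfalso.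
    - apply (Hnz x). unfold in_I; lra. lra. exact He.
    - destruct (deriv_pos_loc g x _ (Derive_correct _ _ (ed0 x ltac:(lra))) Hgt) as [d [Hd [_ Hl]]].
      set (z := Rmax (x - d/2) (x/2)).
      assert (Hz : x - d < z < x /\ 0 <= z) by (unfold z, Rmax; destruct Rle_dec; lra).
      pose proof (Hl z (proj1 Hz)). assert (g x < g z) by (apply Hdec; lra). lra. }
  unfold in_I in Hq0I.
  assert (Hq0p : 0 < q0).
  { destruct (Rtotal_order q0 0) as [H|[H|H]]; auto; exfalso.
    - pose proof (Hpos q0 ltac:(lra)). lra.
    - subst q0. lra. }
  assert (Hq01 : q0 < 1).
  { destruct (Req_dec q0 1). subst q0. lra. lra. }
  assert (Hc1q : q0 < g 0).
  { assert (g q0 < g 0) by (apply Hmax; [unfold in_I; lra | lra]). lra. }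
  assert (Hc1le : g 0 <= 1) by (apply Hmap; unfold in_I; lra).
  assert (Hgc1n : g (g 0) < 0).
  { rewrite Hgc1. assert (0 < g 0 / lam) by (apply Rdiv_lt_0_compat; lra). lra. }
  assert (Eqh0 : qh0 = - q0).
  { destruct Hqh0 as [HI [Heq [_ Hne]]]. unfold in_I in HI.
    assert (Hne' : qh0 <> q0) by (apply Hne; lra).
    assert (Hevq : g (- q0) = g q0) by (apply Hev; unfold in_I; lra).
    destruct (Rlt_or_le qh0 0) as [Hl|Hl].
    - destruct (Rtotal_order qh0 (- q0)) as [H|[H|H]]; auto; exfalso.
      + assert (g qh0 < g (- q0)) by (apply Hinc; lra). lra.
      + assert (g (- q0) < g qh0) by (apply Hinc; lra). lra.
    - exfalso. destruct (Rtotal_order qh0 q0) as [H|[H|H]]; auto.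
      + assert (g q0 < g qh0) by (apply Hdec; lra). lra.
      + assert (g qh0 < g q0) by (apply Hdec; lra). lra. }
  assert (Eqhm1 : qhm1 = 1).
  { destruct Hqhm1 as [HI [Heq [_ Hne]]]. unfold in_I in HI.
    assert (Hne' : qhm1 <> -1) by (apply Hne; lra).
    destruct (Rle_or_lt qhm1 0) as [Hl|Hl].
    - exfalso. assert (g (-1) < g qhm1) by (apply Hinc; lra). lra.
    - destruct (Req_dec qhm1 1); auto. exfalso.
      assert (g 1 < g qhm1) by (apply Hdec; lra). lra. }
  subst qh0 qhm1.
  assert (Hnofix : forall y, -1 < y < 0 -> g y <> y).
  { intros y Hy E. pose proof (Hfixu y ltac:(unfold in_I; lra) E (Hpos y ltac:(lra))). lra. }
  assert (Hqa1 : 1 / lam <= q0).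
  { destruct (Rle_or_lt (1 / lam) q0) as [H|H]; auto. exfalso.
    assert (Hy : -1 < - lam * q0 < 0).
    { split. 2: nra. assert (lam * q0 < lam * (1/lam)) by (apply Rmult_lt_compat_l; lra).
      replace (lam * (1/lam)) with 1 in H0 by (field; lra). lra. }
    apply (Hnofix (- lam * q0) Hy).
    rewrite HFE by (unfold in_I; lra).
    replace (- (- lam * q0) / lam) with q0 by (field; lra). rewrite !Hq0fix. ring. }
  destruct (Ranalysis5.IVT_interv (fun t => - g t) q0 1) as [xs [Hxs1 Hxs2]].
  { intros a Ha. exact (continuity_pt_opp g a (ct0 a ltac:(lra))). }
  lra. rewrite Hq0fix; lra. lra.
  assert (Hgxs : g xs = 0) by lra. clear Hxs2.
  assert (Hxsq : q0 < xs < 1).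
  { split. destruct (Req_dec xs q0). subst xs. lra. lra.
    destruct (Req_dec xs 1). subst xs. lra. lra. }
  assert (Hxsc : xs < g 0).
  { destruct (Rtotal_order xs (g 0)) as [H|[H|H]]; auto; exfalso.
    - rewrite <- H in Hgc1n. lra.
    - assert (g xs < g (g 0)) by (apply Hdec; lra). lra. }
  assert (Hgt : forall t, 0 < t < xs -> 0 < g t <= 1).
  { intros t Ht. split. assert (g xs < g t) by (apply Hdec; lra). lra.
    assert (in_I (g t)) by (apply Hmap; unfold in_I; lra). unfold in_I in H; lra. }
  pose (phi := fun t => Derive g (g t) * Derive g t).
  pose (phi1 := fun t => Derive_n g 2 (g t) * (Derive g t)^2 + Derive g (g t) * Derive_n g 2 t).
  pose (phi2 := fun t => Derive_n g 3 (g t) * (Derive g t)^3 + 3 * Derive_n g 2 (g t) * Derive g t * Derive_n g 2 t + Derive g (g t) * Derive_n g 3 t).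
  pose (dd := fun t => g (g t) - t).
  assert (HgI : forall t, -1 <= t <= 1 -> -1 <= g t <= 1).
  { intros t Ht. assert (in_I (g t)) by (apply Hmap; unfold in_I; lra). exact H. }
  assert (Hdd : forall t, -1 <= t <= 1 -> is_derive dd t (phi t - 1)).
  { intros t Ht. pose proof (ed0 t Ht). pose proof (ed0 (g t) (HgI t Ht)).
    unfold dd, phi. auto_derive. tauto. change (fun x : R => g x) with g. ring. }
  assert (Hphi : forall t, -1 <= t <= 1 -> is_derive phi t (phi1 t)).
  { intros t Ht. apply phi_derive. apply ed0; lra. apply ed0, HgI; lra. apply ed1; lra. apply ed1, HgI; lra. }
  assert (Hphi1 : forall t, -1 <= t <= 1 -> is_derive phi1 t (phi2 t)).
  { intros t Ht. apply phi2_derive. apply ed0; lra. apply ed0, HgI; lra. apply ed1; lra. apply ed1, HgI; lra.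
    apply ed2; lra. apply ed2, HgI; lra. }
  assert (HMP : forall al be, 0 < al -> al < be -> be < xs -> forall x, al < x < be -> Rmin (phi al) (phi be) < phi x).
  { intros al be H1 H2 H3. apply minprin with phi1 phi2. lra.
    - intros x Hx. apply continuity_pt_filterlim.
      exact (ex_derive_continuous phi x (ex_intro _ _ (Hphi x ltac:(lra)))).
    - intros x Hx. apply Hphi. lra.
    - intros x Hx. apply Hphi1. lra.
    - intros x Hx E. unfold phi1 in E. unfold phi2.
      pose proof (Hgt x ltac:(lra)) as Hgx.
      apply alg.
      + apply Hneg. lra.
      + apply Hneg. lra.
      + pose proof (Hsch (g x) ltac:(unfold in_I; lra) ltac:(lra)) as S. unfold schwarzian in S. exact S.
      + pose proof (Hsch x ltac:(unfold in_I; lra) ltac:(lra)) as S. unfold schwarzian in S. exact S.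
      + exact E. }
  assert (HMVT : forall u v, -1 <= u -> u < v -> v <= 1 -> exists c, dd v - dd u = (phi c - 1) * (v - u) /\ u < c < v).
  { intros u v H1 H2 H3. apply MVT_cor2 with (f' := fun t => phi t - 1). exact H2.
    intros c Hc. apply is_derive_Reals. apply Hdd. lra. }
  assert (Hdd0 : dd 0 < 0) by (unfold dd; lra).
  assert (Hddq : dd q0 = 0) by (unfold dd; rewrite !Hq0fix; ring).
  destruct (HMVT 0 q0) as [xi [Hxi1 Hxi2]]; try lra.
  assert (Hpxi : 1 < phi xi) by nra.
  destruct (HMVT q0 xs) as [ze [Hze1 Hze2]]; try lra.
  assert (Hddxs : dd xs = g 0 - xs) by (unfold dd; rewrite Hgxs; ring).
  assert (Hpze : 1 < phi ze) by nra.
  assert (Hphiq0 : phi q0 = (Derive g q0)^2) by (unfold phi; rewrite Hq0fix; ring).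
  assert (Hp1 : 1 < phi q0).
  { destruct (Rlt_or_le 1 (phi q0)) as [H|H]; auto. exfalso.
    pose proof (HMP xi ze ltac:(lra) ltac:(lra) ltac:(lra) q0 ltac:(lra)).
    assert (1 < Rmin (phi xi) (phi ze)) by (apply Rmin_glb_lt; lra). lra. }
  assert (Habs : Rabs (Derive g q0) > 1).
  { rewrite Rabs_left by lra. nra. }
  assert (Hqa : q0 = 1 / lam).
  { destruct (Req_dec q0 (1/lam)) as [E|E]; auto. exfalso.
    assert (Ha : 1 / lam < q0) by lra.
    assert (Ha0 : 0 < 1 / lam) by (apply Rdiv_lt_0_compat; lra).
    assert (Hdda : dd (1/lam) = 0).
    { unfold dd. pose proof (HFE (-1) ltac:(unfold in_I; lra)) as F.
      replace (- -1 / lam) with (1/lam) in F by (field; lra).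
      rewrite Hgm1 in F. apply (Rmult_eq_reg_l lam). 2: lra.
      replace (lam * (1/lam - 1/lam)) with 0 by (field; lra).
      replace (lam * (g (g (1 / lam)) - 1 / lam)) with (lam * g (g (1/lam)) - 1) by (field; lra). lra. }
    destruct (HMVT 0 (1/lam)) as [xi' [H1 H2]]; try lra.
    assert (1 < phi xi') by nra.
    destruct (HMVT (1/lam) q0) as [s [H3 H4]]; try lra.
    assert (Hs : phi s = 1).
    { rewrite Hddq, Hdda in H3. assert ((phi s - 1) * (q0 - 1/lam) = 0) by lra.
      apply Rmult_integral in H0. destruct H0; lra. }
    pose proof (HMP xi' q0 ltac:(lra) ltac:(lra) ltac:(lra) s ltac:(lra)).
    assert (1 < Rmin (phi xi') (phi q0)) by (apply Rmin_glb_lt; lra). lra. }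
  assert (Hevd : forall y, -1 < y < 1 -> Derive g y = - Derive g (- y)).
  { intros y Hy. apply even_deriv.
    - apply loc_ball with (Rmin (1 - y) (1 + y)). apply Rmin_glb_lt; lra.
      intros t Ht. assert (Hm1 : Rmin (1 - y) (1 + y) <= 1 - y) by apply Rmin_l.
      assert (Hm2 : Rmin (1 - y) (1 + y) <= 1 + y) by apply Rmin_r.
      apply Rabs_def2 in Ht. symmetry. apply Hev. unfold in_I; lra.
    - apply ed0; lra. }
  assert (Hd_m1 : Derive g (-1) = (Derive g q0)^2).
  { pose (f2 := fun y => Derive g (g (-y/lam)) * Derive g (-y/lam)).
    assert (Hf2 : f2 (-1) = (Derive g q0)^2).
    { unfold f2. replace (- -1 / lam) with q0 by (rewrite Hqa; field; lra). rewrite Hq0fix. ring. }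
    rewrite <- Hf2. apply cont_eq_right with 1.
    - apply ct1; lra.
    - apply continuity_pt_filterlim.
      assert (Hq : - -1 / lam = q0) by (rewrite Hqa; field; lra).
      assert (E1 : ex_derive (Derive g) (- -1 / lam)) by (rewrite Hq; apply ed1; lra).
      assert (E2 : ex_derive (Derive g) (g (- -1 / lam))) by (rewrite Hq, Hq0fix; apply ed1; lra).
      assert (E3 : ex_derive g (- -1 / lam)) by (rewrite Hq; apply ed0; lra).
      assert (Hex : ex_derive f2 (-1)) by (unfold f2; auto_derive; repeat split; assumption).
      exact (ex_derive_continuous f2 (-1) Hex).
    - lra.
    - intros y Hy. unfold f2. apply fe_deriv. lra.
      + apply loc_ball with (y + 1). lra. intros t Ht. apply Rabs_def2 in Ht.
        apply HFE. unfold in_I; lra.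
      + apply ed0. split.
        * assert (0 < - y / lam) by (apply Rdiv_lt_0_compat; lra). lra.
        * assert (- y / lam < 1 / lam) by (apply Rmult_lt_compat_r; [apply Rinv_0_lt_compat; lra | lra]).
          lra.
      + apply ed0, HgI. split.
        * assert (0 < - y / lam) by (apply Rdiv_lt_0_compat; lra). lra.
        * assert (- y / lam < 1 / lam) by (apply Rmult_lt_compat_r; [apply Rinv_0_lt_compat; lra | lra]).
          lra. }
  assert (Hd_1 : Derive g 1 = - Derive g (-1)).
  { apply (cont_eq_left (Derive g) (fun y => - Derive g (- y)) 1 1).
    - apply ct1; lra.
    - apply continuity_pt_filterlim.
      assert (E1 : ex_derive (Derive g) (- 1)) by (apply ed1; lra).
      assert (Hex : ex_derive (fun y => - Derive g (- y)) 1) by (auto_derive; exact E1).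
      exact (ex_derive_continuous _ 1 Hex).
    - lra.
    - intros y Hy. apply Hevd. lra. }
  assert (HK : forall x, q0 < x < 1 -> Rmin (- Derive g q0) (- Derive g 1) < - Derive g x).
  { apply (minprin (fun t => - Derive g t) (fun t => - Derive_n g 2 t) (fun t => - Derive_n g 3 t) q0 1).
    - lra.
    - intros x Hx. exact (continuity_pt_opp _ x (ct1 x ltac:(lra))).
    - intros x Hx. exact (is_derive_opp _ _ _ (Derive_correct _ _ (ed1 x ltac:(lra)))).
    - intros x Hx. exact (is_derive_opp _ _ _ (Derive_correct _ _ (ed2 x ltac:(lra)))).
    - intros x Hx E.
      pose proof (Hsch x ltac:(unfold in_I; lra) ltac:(lra)) as S. unfold schwarzian in S.
      assert (E2 : Derive_n g 2 x = 0) by lra. rewrite E2 in S.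
      pose proof (Hneg x ltac:(lra)) as Hn.
      assert (Hi : / Derive g x < 0) by (apply Rinv_lt_0_compat; lra).
      unfold Rdiv in S. ring_simplify in S. nra. }
  assert (HKv : Rabs (Derive g q0) = - Derive g q0) by (rewrite Rabs_left; lra).
  assert (Hright : forall x, q0 <= x <= 1 -> Rabs (Derive g x) >= Rabs (Derive g q0)).
  { intros x Hx. rewrite HKv.
    destruct (Req_dec x q0) as [E|E]. subst x. rewrite HKv. lra.
    destruct (Req_dec x 1) as [E1|E1]. subst x. rewrite Hd_1, Hd_m1.
    rewrite Rabs_Ropp. rewrite Rabs_pos_eq by nra. nra.
    pose proof (HK x ltac:(lra)) as Hx1.
    rewrite Rabs_left by (apply Hneg; lra).
    rewrite Hd_1, Hd_m1 in Hx1.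
    revert Hx1. unfold Rmin. destruct Rle_dec; nra. }
  split. exact Habs.
  intros x [Hx|Hx].
  - destruct (Req_dec x (-1)) as [E|E].
    + subst x. rewrite Hd_m1. rewrite HKv. rewrite Rabs_pos_eq by nra. nra.
    + rewrite Hevd by lra. rewrite Rabs_Ropp. apply Hright. lra.
  - apply Hright. lra.
Qed.
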